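(* Let $f\in\mathbb{F}_2((T^{-1}))$ be the unique solution with $|f|<1$ of the equation $$X^4+X+\frac{T}{T^4+1}=0.$$ Then $\mu(f)=3$.
   Context: Fix a real $|T|>1$; the absolute value on $\mathbb{F}_2((T^{-1}))$ is $|g|=|T|^{-i_0}$ where $T^{-i_0}$ is the leading term of $g\ne0$, so $|P/Q|=|T|^{\deg P-\deg Q}$. (The equation has exactly one solution in $\{|g|<1\}$.) The irrationality exponent $\mu(f)$ is the supremum of real $\tau$ such that $|f-P/Q|<|Q|^{-\tau}$ has infinitely many solutions $(P,Q)\in\mathbb{F}_2[T]^2$, $Q\ne0$. *)

(* Defs.v *)
From HB Require Import structures.
From mathcomp Require Import all_boot all_order all_algebra.
From mathcomp Require Import all_classical all_reals all_analysis.
From mathcomp Require Import zify.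
Set Implicit Arguments. Unset Strict Implicit. Unset Printing Implicit Defensive.
Import Order.TTheory GRing.Theory Num.Theory.
Local Open Scope ring_scope.

(* Laurent series in F_2((T^{-1})): coefficient of T^i for i : int,
   with an explicit upper bound beyond which all coefficients vanish. *)
Record laurent := Laurent {
  lcoef : int -> 'F_2 ;
  lbnd : int ;
  lbndP : forall i : int, lbnd < i -> lcoef i = 0 }.

Definition ls_eq (a b : laurent) : Prop := forall i, lcoef a i = lcoef b i.

Lemma ls_add_bnd (a b : laurent) :
  forall i : int, Num.max (lbnd a) (lbnd b) < i -> lcoef a i + lcoef b i = 0.
Proof.
move=> i; rewrite gt_max => /andP[ha hb].
by rewrite (lbndP ha) (lbndP hb) addr0.
Qed.
Definition ls_add (a b : laurent) : laurent :=
  Laurent (@ls_add_bnd a b).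

Lemma ls_sub_bnd (a b : laurent) :
  forall i : int, Num.max (lbnd a) (lbnd b) < i -> lcoef a i - lcoef b i = 0.
Proof.
move=> i; rewrite gt_max => /andP[ha hb].
by rewrite (lbndP ha) (lbndP hb) subr0.
Qed.
Definition ls_sub (a b : laurent) : laurent :=
  Laurent (@ls_sub_bnd a b).

(* Cauchy product: coefficient of T^n is sum_{i+j=n} a_i b_j, where only
   i in [n - lbnd b, lbnd a] can contribute. *)
Definition ls_mul_coef (a b : laurent) (n : int) : 'F_2 :=
  \sum_(k < (absz (lbnd a + lbnd b - n)%R).+1)
     lcoef a (lbnd a - k%:Z) * lcoef b (n - lbnd a + k%:Z).

Lemma ls_mul_bnd (a b : laurent) :
  forall n : int, lbnd a + lbnd b < n -> ls_mul_coef a b n = 0.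
Proof.
move=> n hn; apply: big1 => k _.
have hb : lbnd b < n - lbnd a + k%:Z by lia.
by rewrite (lbndP hb) mulr0.
Qed.
Definition ls_mul (a b : laurent) : laurent :=
  Laurent (@ls_mul_bnd a b).

Lemma ls_of_poly_bnd (p : {poly 'F_2}) :
  forall i : int, (size p)%:Z < i ->
    (if (0 <= i) then p`_(absz i) else 0) = 0.
Proof.
move=> i hi; case: ifP => // hi0; apply: nth_default.
case: i hi hi0 => // m hi _; rewrite ltz_nat in hi; exact: ltnW.
Qed.
Definition ls_of_poly (p : {poly 'F_2}) : laurent :=
  Laurent (@ls_of_poly_bnd p).

Definition ls_zero : laurent := ls_of_poly 0.

(* absolute value |g| = c^(i0) where T^(i0) is the leading term of g != 0,
   and |0| = 0; written as the max (= sup) of c^i over the support. *)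
Definition ls_abs (R : realType) (c : R) (g : laurent) : R :=
  sup [set c ^ i | i in [set i : int | lcoef g i != 0]].

Definition ls_is_quot (g : laurent) (P Q : {poly 'F_2}) : Prop :=
  ls_eq (ls_mul (ls_of_poly Q) g) (ls_of_poly P).

Definition approx_set (R : realType) (c : R) (f : laurent) (tau : R)
  : set ({poly 'F_2} * {poly 'F_2}) :=
  [set PQ | PQ.2 != 0 /\
     exists g, ls_is_quot g PQ.1 PQ.2 /\
       ls_abs c (ls_sub f g) < powR (ls_abs c (ls_of_poly PQ.2)) (- tau)].

Definition irr_exponent (R : realType) (c : R) (f : laurent) : \bar R :=
  ereal_sup [set tau%:E | tau in [set tau : R | infinite_set (approx_set c f tau)]].

Definition solves_eq (f : laurent) : Prop :=
  exists h : laurent,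
    ls_is_quot h 'X ('X^4 + 1) /\
    ls_eq (ls_add (ls_add (ls_mul f (ls_mul f (ls_mul f f))) f) h) ls_zero.

(* Main.v *)
Set Warnings "-all".
Require Import Defs.
From HB Require Import structures.
From mathcomp Require Import all_boot all_order all_algebra.
From mathcomp Require Import all_classical all_reals all_analysis.
From mathcomp Require Import zify ring lra.
Set Implicit Arguments. Unset Strict Implicit. Unset Printing Implicit Defensive.
Import Order.TTheory GRing.Theory Num.Theory.
Local Open Scope ring_scope.
Lemma F2add (x : 'F_2) : x + x = 0.
Proof. by case: x => [[|[|[]]]] //= ?; apply/val_inj. Qed.
Lemma F2mul (x : 'F_2) : x * x = x.
Proof. by case: x => [[|[|[]]]] //= ?; apply/val_inj. Qed.
Lemma F2neq0 (x : 'F_2) : x != 0 -> x = 1.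
Proof. by case: x => [[|[|[]]]] //= ? _; apply/val_inj. Qed.
Lemma F2opp (x : 'F_2) : - x = x.
Proof. by case: x => [[|[|[]]]] //= ?; apply/val_inj. Qed.

Definition zsum (lo : int) (N : nat) (F : int -> 'F_2) : 'F_2 :=
  \sum_(k < N) F (lo + k%:Z).

Lemma zsum_widen lo1 N1 lo2 N2 F :
  lo2 <= lo1 -> lo1 + N1%:Z <= lo2 + N2%:Z ->
  (forall i, i < lo1 \/ lo1 + N1%:Z <= i -> F i = 0) ->
  zsum lo2 N2 F = zsum lo1 N1 F.
Proof.
move=> h1 h2 hF; rewrite /zsum.
set d := absz (lo1 - lo2).
have hd : lo1 = lo2 + d%:Z by rewrite /d; lia.
have hN : (d + N1 <= N2)%N by lia.
rewrite -(big_mkord xpredT (fun k => F (lo2 + k%:Z))) -(big_mkord xpredT (fun k => F (lo1 + k%:Z))).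
rewrite (@big_cat_nat _ _ _ d 0 N2) //; last by lia.
rewrite (@big_cat_nat _ _ _ (d + N1)%N d N2) //; last by lia.
have e1 : \sum_(0 <= i < d) F (lo2 + i%:Z) = 0.
  rewrite big_nat_cond big1 // => k /andP[/andP[_ hk] _]; apply: hF; left; lia.
have e3 : \sum_(d + N1 <= i < N2) F (lo2 + i%:Z) = 0.
  rewrite big_nat_cond big1 // => k /andP[/andP[hk _] _]; apply: hF; right; lia.
rewrite e1 e3 /= add0r addr0.
rewrite -{1}(add0n d) big_addn addnC addnK.
apply: eq_bigr => k _; congr F; lia.
Qed.

Lemma zsum_delta lo N x (F : int -> 'F_2) :
  zsum lo N (fun j => (j == x)%:R * F j) =
  if (lo <= x) && (x < lo + N%:Z) then F x else 0.
Proof.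
rewrite /zsum; case: ifP => hx.
  have hk : (absz (x - lo) < N)%N by lia.
  rewrite (bigD1 (Ordinal hk)) //= big1 ?addr0.
    have -> : lo + (absz (x - lo))%:Z = x by lia.
    by rewrite eqxx mul1r.
  move=> k hk'; have -> : (lo + k%:Z == x) = false.
    apply/negbTE; apply: contra hk' => /eqP e; apply/eqP/val_inj => /=; lia.
  by rewrite mul0r.
apply: big1 => k _; have -> : (lo + k%:Z == x) = false.
  have hk := ltn_ord k; apply/negbTE/eqP => e; move/negbT: hx; rewrite negb_and => /orP[]; rewrite -?ltNge -?leNgt; lia.
by rewrite mul0r.
Qed.

Lemma zsumD lo N F G : zsum lo N (fun i => F i + G i) = zsum lo N F + zsum lo N G.
Proof. by rewrite /zsum big_split. Qed.

Lemma zsumMl lo N a F : zsum lo N (fun i => a * F i) = a * zsum lo N F.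
Proof. by rewrite /zsum mulr_sumr. Qed.

Lemma zsum_ext lo N F G : (forall i, lo <= i -> i < lo + N%:Z -> F i = G i) ->
  zsum lo N F = zsum lo N G.
Proof. move=> h; apply: eq_bigr => k _; have hk := ltn_ord k; apply: h; lia. Qed.

Lemma zsum0 lo N F : (forall i, lo <= i -> i < lo + N%:Z -> F i = 0) -> zsum lo N F = 0.
Proof. move=> h; apply: big1 => k _; have hk := ltn_ord k; apply: h; lia. Qed.

Lemma zsum_exch lo N lo' N' (F : int -> int -> 'F_2) :
  zsum lo N (fun i => zsum lo' N' (F i)) = zsum lo' N' (fun j => zsum lo N (F^~ j)).
Proof. by rewrite /zsum exchange_big. Qed.

Lemma sum_sym2 N (F : nat -> nat -> 'F_2) : (forall i j, F i j = F j i) ->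
  \sum_(i < N) \sum_(j < N) F i j = \sum_(i < N) F i i.
Proof.
move=> hs; elim: N => [|N IH]; first by rewrite !big_ord0.
rewrite [LHS]big_ord_recr [RHS]big_ord_recr /= big_ord_recr /=.
rewrite (eq_bigr (fun i : 'I_N => \sum_(j < N) F i j + F i N)); last first.
  by move=> i _; rewrite big_ord_recr.
rewrite big_split /= IH.
rewrite (eq_bigr (fun i : 'I_N => F N i)); last by move=> i _; rewrite hs.
set S := \sum_(i < N) F N i.
rewrite -[LHS]addrA; congr (_ + _).
by rewrite addrA F2add add0r.
Qed.

Lemma zsum_sym2 lo N (F : int -> int -> 'F_2) : (forall i j, F i j = F j i) ->
  zsum lo N (fun i => zsum lo N (F i)) = zsum lo N (fun i => F i i).
Proof.
move=> hs; rewrite /zsum.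
by rewrite (@sum_sym2 N (fun i j : nat => F (lo + i%:Z) (lo + j%:Z))) // => i j; apply: hs.
Qed.
Lemma lzero (a : laurent) i : lbnd a < i -> lcoef a i = 0.
Proof. exact: lbndP. Qed.

Lemma coef_mul (a b : laurent) n lo N :
  lo <= n - lbnd b -> lbnd a < lo + N%:Z ->
  lcoef (ls_mul a b) n = zsum lo N (fun i => lcoef a i * lcoef b (n - i)).
Proof.
move=> h1 h2; rewrite /=.
case: (ltrP (lbnd a + lbnd b) n) => hn.
  rewrite ls_mul_bnd // zsum0 // => i _ _.
  case: (lerP i (lbnd a)) => hi; last by rewrite lzero // mul0r.
  by rewrite (@lzero b) ?mulr0 //; lia.
rewrite /ls_mul_coef.
set K := absz (lbnd a + lbnd b - n)%R.
rewrite (zsum_widen (lo1 := n - lbnd b) (N1 := K.+1)); first last.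
- move=> i [hi|hi].
    by rewrite (@lzero b) ?mulr0 //; lia.
  by rewrite lzero ?mul0r //; rewrite /K in hi; lia.
- rewrite /K; lia.
- by [].
rewrite /zsum (reindex_inj rev_ord_inj) /=.
apply: eq_bigr => k _; have hk := ltn_ord k.
rewrite subSS; congr (_ * _); congr lcoef; rewrite /K in hk *; lia.
Qed.

Definition pc (p : {poly 'F_2}) (i : int) : 'F_2 := if 0 <= i then p`_(absz i) else 0.

Lemma lcoef_poly (p : {poly 'F_2}) i : lcoef (ls_of_poly p) i = pc p i.
Proof. by []. Qed.

Lemma pc_size (p : {poly 'F_2}) (i : int) : (size p)%:Z <= i -> pc p i = 0.
Proof. rewrite /pc; case: (lerP 0 i) => // h1 h2; apply: nth_default; have h3 : (size p <= absz i)%N by lia. exact: h3. Qed.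

Lemma pc_neg (p : {poly 'F_2}) (i : int) : i < 0 -> pc p i = 0.
Proof. by rewrite /pc; case: (lerP 0 i) => //; lia. Qed.

Lemma coef_pmul (p : {poly 'F_2}) (g : laurent) n :
  lcoef (ls_mul (ls_of_poly p) g) n = zsum 0 (size p) (fun j => pc p j * lcoef g (n - j)).
Proof.
set lo := - (`|n| + `|lbnd g|).
rewrite (coef_mul (lo := lo) (N := absz ((size p)%:Z - lo + 1)%R)); first last.
- rewrite /=; lia.
- rewrite /lo; lia.
apply: zsum_widen.
- rewrite /lo; lia.
- rewrite /lo; lia.
move=> i [hi|hi]; rewrite lcoef_poly.
  by rewrite pc_neg ?mul0r.
by rewrite pc_size ?mul0r //; lia.
Qed.
Lemma sq_gen (f : laurent) n lo N :
  lo <= n - lbnd f -> lbnd f < lo + N%:Z ->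
  lcoef (ls_mul f f) n = zsum lo N (fun i => (i + i == n)%:R * lcoef f i).
Proof.
move=> h1 h2; rewrite (coef_mul h1 h2).
set A := lbnd f.
rewrite (zsum_ext (G := fun i => zsum lo N (fun j => (i + j == n)%:R * (lcoef f i * lcoef f j)))); last first.
  move=> i hi1 hi2.
  have -> : zsum lo N (fun j => (i + j == n)%:R * (lcoef f i * lcoef f j)) =
            lcoef f i * zsum lo N (fun j => (j == n - i)%:R * lcoef f j).
    rewrite -zsumMl; apply: zsum_ext => j _ _.
    have -> : (i + j == n) = (j == n - i) by apply/eqP/eqP; lia.
    by rewrite mulrCA.
  rewrite zsum_delta; case: ifP => // hw.
  case: (lerP (n - i) A) => hA.
    rewrite (@lzero f i) ?mul0r //.
    move/negbT: hw; rewrite negb_and => /orP[]; rewrite -?ltNge -?leNgt; lia.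
  by rewrite (@lzero f (n - i)) ?mulr0.
rewrite zsum_sym2; last first.
  move=> i j; rewrite [j + i]addrC; congr (_ * _); exact: mulrC.
by apply: zsum_ext => i _ _; rewrite F2mul.
Qed.

Lemma sq_even (f : laurent) m : lcoef (ls_mul f f) (m + m) = lcoef f m.
Proof.
set lo := - (2 * `|m| + `|lbnd f| + 1).
rewrite (sq_gen (lo := lo) (N := absz (lbnd f - lo + 1)%R)); try by rewrite /lo /=; lia.
rewrite (zsum_ext (G := fun i => (i == m)%:R * lcoef f i)); last first.
  by move=> i _ _; congr (_ * _); congr (_%:R); apply/eqP/eqP; lia.
rewrite zsum_delta; case: ifP => // hw.
rewrite lzero //; move/negbT: hw; rewrite negb_and => /orP[]; rewrite -?ltNge -?leNgt /lo; lia.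
Qed.

Lemma sq_odd (f : laurent) m : lcoef (ls_mul f f) (m + m + 1) = 0.
Proof.
set lo := - (2 * `|m| + `|lbnd f| + 1).
rewrite (sq_gen (lo := lo) (N := absz (lbnd f - lo + 1)%R)); try by rewrite /lo /=; lia.
apply: zsum0 => i _ _.
have -> : (i + i == m + m + 1) = false by apply/negbTE/eqP; lia.
by rewrite mul0r.
Qed.

Lemma quad_gen (a b : laurent) n lo N :
  lo <= n - lbnd a - lbnd b -> lbnd a < lo + N%:Z ->
  lcoef (ls_mul a (ls_mul a b)) n = zsum lo N (fun i => lcoef a i * lcoef b (n - i - i)).
Proof.
move=> h1 h2.
rewrite (coef_mul (lo := lo) (N := N)) //; last by rewrite /=; lia.
set A := lbnd a.
rewrite (zsum_ext (G := fun i => zsum lo N (fun j => lcoef a i * lcoef a j * lcoef b (n - i - j)))); last first.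
  move=> i hi1 hi2.
  case: (lerP i A) => hA; last by rewrite (@lzero a i) // mul0r zsum0 // => j _ _; rewrite !mul0r.
  rewrite (coef_mul (lo := lo) (N := N)) //; last by lia.
  by rewrite -zsumMl; apply: zsum_ext => j _ _; rewrite mulrA.
rewrite zsum_sym2; last first.
  by move=> i j; rewrite (mulrC (lcoef a i)); congr (_ * _); congr lcoef; lia.
by apply: zsum_ext => i _ _; rewrite F2mul.
Qed.

Lemma frob_even (f : laurent) m :
  lcoef (ls_mul f (ls_mul f (ls_mul f f))) (m + m) = lcoef (ls_mul f f) m.
Proof.
set lo := - (2 * `|m| + 4 * `|lbnd f| + 1).
rewrite (quad_gen (lo := lo) (N := absz (lbnd f - lo + 1)%R)); try by rewrite /lo /=; lia.
rewrite (coef_mul (lo := lo) (N := absz (lbnd f - lo + 1)%R)); try by rewrite /lo /=; lia.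
apply: zsum_ext => i _ _.
have -> : m + m - i - i = (m - i) + (m - i) by ring.
by rewrite sq_even.
Qed.

Lemma frob_odd (f : laurent) m :
  lcoef (ls_mul f (ls_mul f (ls_mul f f))) (m + m + 1) = 0.
Proof.
set lo := - (2 * `|m| + 4 * `|lbnd f| + 1).
rewrite (quad_gen (lo := lo) (N := absz (lbnd f - lo + 1)%R)); try by rewrite /lo /=; lia.
apply: zsum0 => i _ _.
have -> : m + m + 1 - i - i = (m - i) + (m - i) + 1 by ring.
by rewrite sq_odd mulr0.
Qed.

Lemma frob4 (f : laurent) k r : (0 <= r < 4)%R ->
  lcoef (ls_mul f (ls_mul f (ls_mul f f))) (4 * k + r) = if r == 0 then lcoef f k else 0.
Proof.
move=> hr.
have [->|r1] := eqVneq r 0.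
  have -> : 4 * k + 0 = (k + k) + (k + k) by ring.
  by rewrite frob_even sq_even.
have [->|r2] := eqVneq r 2.
  have -> : 4 * k + 2 = (k + k + 1) + (k + k + 1) by ring.
  by rewrite frob_even sq_odd.
have [->|r3] := eqVneq r 1.
  have -> : 4 * k + 1 = (k + k) + (k + k) + 1 by ring.
  by rewrite frob_odd.
have -> : r = 3 by lia.
have -> : 4 * k + 3 = (k + k + 1) + (k + k + 1) + 1 by ring.
by rewrite frob_odd.
Qed.
Definition QX (N : nat) : {poly 'F_2} := 'X^N + 1.

Lemma size_QX N : (0 < N)%N -> size (QX N) = N.+1.
Proof. by move=> h; rewrite /QX -polyC1 size_XnaddC. Qed.

Lemma pc_QX N j : (0 < N)%N -> pc (QX N) j = (j == 0)%:R + (j == N%:Z)%:R.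
Proof.
move=> hN; rewrite /pc /QX coefD coefXn coef1.
case: (lerP 0 j) => hj.
  rewrite addrC; congr (_ + _); congr (_%:R); apply/eqP/eqP; lia.
have -> : (j == 0) = false by apply/negbTE/eqP; lia.
have -> : (j == N%:Z) = false by apply/negbTE/eqP; lia.
by rewrite addr0.
Qed.

Lemma coef_QX N (g : laurent) n : (0 < N)%N ->
  lcoef (ls_mul (ls_of_poly (QX N)) g) n = lcoef g n + lcoef g (n - N%:Z).
Proof.
move=> hN; rewrite coef_pmul size_QX //.
rewrite (zsum_ext (G := fun j => (j == 0)%:R * lcoef g (n - j) + (j == N%:Z)%:R * lcoef g (n - j))); last first.
  by move=> j _ _; rewrite pc_QX // mulrDl.
rewrite zsumD !zsum_delta !ifT ?subr0 //; apply/andP; split; lia.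
Qed.

Lemma pc_X (n : int) : pc 'X n = (n == 1)%:R.
Proof.
rewrite /pc coefX; case: (lerP 0 n) => hn.
  congr (_%:R); apply/eqP/eqP; lia.
have -> : (n == 1) = false by apply/negbTE/eqP; lia.
by [].
Qed.

Lemma rec_unique (x y e : int -> 'F_2) (d : nat) (B : int) : (0 < d)%N ->
  (forall i, B < i -> x i = 0) -> (forall i, B < i -> y i = 0) ->
  (forall n, x n + x (n - d%:Z) = e n) -> (forall n, y n + y (n - d%:Z) = e n) ->
  forall i, x i = y i.
Proof.
move=> hd hx hy ex ey.
have key : forall k : nat, forall i, B - (k * d)%:Z < i -> x i = y i.
  elim=> [|k IH] i hi.
    by rewrite hx ?hy //; lia.
  have e1 : x i = e (i + d%:Z) - x (i + d%:Z).
    have hh : i + d%:Z - d%:Z = i by ring.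
    by rewrite -(ex (i + d%:Z)) hh [x (i + d%:Z) + _]addrC addrK.
  have e2 : y i = e (i + d%:Z) - y (i + d%:Z).
    have hh : i + d%:Z - d%:Z = i by ring.
    by rewrite -(ey (i + d%:Z)) hh [y (i + d%:Z) + _]addrC addrK.
  by rewrite e1 e2 IH //; lia.
move=> i; apply: (key (absz (B - i)).+1); have := leq_pmulr (absz (B - i)).+1 hd; lia.
Qed.

Definition Hc (n : int) : 'F_2 := ((n < 0) && ((n %% 4)%Z == 1))%:R.

Lemma h_coef (h : laurent) : ls_is_quot h 'X ('X^4 + 1) -> forall n, lcoef h n = Hc n.
Proof.
move=> hq.
apply: (@rec_unique _ _ (fun n => (n == 1)%:R) 4%N (Num.max (lbnd h) 0)) => //.
- by move=> i hi; apply: lzero; lia.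
- by move=> i hi; rewrite /Hc; have -> : (i < 0) = false by lia.
- move=> n; have := hq n; rewrite (coef_QX (N := 4)) // => ->.
  by rewrite lcoef_poly pc_X.
move=> n; rewrite /Hc.
case: (ltrP n 0) => hn /=.
  have -> : (n - 4%:Z < 0) = true by lia.
  have -> : ((n - 4%:Z) %% 4)%Z = (n %% 4)%Z by lia.
  rewrite F2add; have -> : (n == 1) = false by lia.
  by [].
case: (ltrP (n - 4%:Z) 0) => hn2 /=; last first.
  have -> : (n == 1) = false by lia.
  by rewrite addr0.
rewrite add0r; congr (_%:R); apply/eqP/eqP; lia.
Qed.

Lemma f_rec (f h : laurent) :
  ls_is_quot h 'X ('X^4 + 1) ->
  ls_eq (ls_add (ls_add (ls_mul f (ls_mul f (ls_mul f f))) f) h) ls_zero ->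
  forall i, lcoef f i = (if ((i %% 4)%Z == 0) then lcoef f (i %/ 4)%Z else 0) + Hc i.
Proof.
move=> hq he i.
have := he i.
change (lcoef (ls_mul f (ls_mul f (ls_mul f f))) i + lcoef f i + lcoef h i = lcoef ls_zero i -> lcoef f i =
   (if ((i %% 4)%Z == 0) then lcoef f (i %/ 4)%Z else 0) + Hc i).
rewrite (h_coef hq) /ls_zero lcoef_poly /pc coef0 if_same.
have -> : i = 4 * (i %/ 4)%Z + (i %% 4)%Z by lia.
rewrite frob4; last by lia.
have -> : ((4 * (i %/ 4)%Z + (i %% 4)%Z) %% 4)%Z = (i %% 4)%Z by lia.
have -> : ((4 * (i %/ 4)%Z + (i %% 4)%Z) %/ 4)%Z = (i %/ 4)%Z by lia.
set a := (if _ then _ else _); set b := lcoef f _; set c := Hc _.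
move=> e; apply/eqP; rewrite -subr_eq0 F2opp addrCA addrA; apply/eqP; exact: e.
Qed.
Definition fprop (p : int -> 'F_2) :=
  (forall i, 0 <= i -> p i = 0) /\
  (forall i, p i = (if ((i %% 4)%Z == 0) then p (i %/ 4)%Z else 0) + Hc i).

Lemma fp4 p : fprop p -> forall i, i < 0 -> p (4 * i) = p i.
Proof.
move=> [_ h] i hi; rewrite h /Hc.
have -> : ((4 * i) %% 4)%Z = 0 by lia.
have -> : ((4 * i) %/ 4)%Z = i by lia.
by rewrite eqxx andbF addr0.
Qed.

Lemma fpm p : fprop p -> forall i, i < 0 -> ((i %% 4)%Z != 0) -> p i = ((i %% 4)%Z == 1)%:R.
Proof.
move=> [_ h] i hi h4; rewrite h (negbTE h4) add0r /Hc.
by have -> : (i < 0) = true by lia.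
Qed.

Definition P4 (n : nat) : int := (4 ^ n)%N%:Z.

Lemma P4S n : P4 n.+1 = 4 * P4 n.
Proof. by rewrite /P4 expnS; lia. Qed.

Lemma P4_gt0 n : 0 < P4 n.
Proof. rewrite /P4; have := expn_gt0 4 n; lia. Qed.

Lemma fp_m3 p : fprop p -> forall n, p (- (3 * P4 n)) = 1.
Proof.
move=> hp; elim=> [|n IH].
  by rewrite /P4 /= (fpm hp).
have := P4_gt0 n => hpos.
by rewrite P4S (_ : - (3 * (4 * P4 n)) = 4 * (- (3 * P4 n))) ?fp4 //; lia.
Qed.

Lemma fp_m1 p : fprop p -> forall n, p (- P4 n) = 0.
Proof.
move=> hp; elim=> [|n IH].
  by rewrite /P4 /= (fpm hp).
have := P4_gt0 n => hpos.
by rewrite P4S (_ : - (4 * P4 n) = 4 * (- P4 n)) ?fp4 //; lia.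
Qed.

Lemma fp_per p : fprop p -> forall n i, - (3 * P4 n) < i -> i < - P4 n -> p i = p (i + P4 n).
Proof.
move=> hp; elim=> [|n IH] i h1 h2.
  have -> : i = -2 by rewrite /P4 /= in h1 h2; lia.
  by rewrite /P4 /= !(fpm hp).
have := P4_gt0 n => hpos; rewrite P4S in h1 h2 *.
have [h0|h0] := eqVneq ((i %% 4)%Z) 0.
  have ei : i = 4 * (i %/ 4)%Z by lia.
  rewrite ei (_ : 4 * (i %/ 4)%Z + 4 * P4 n = 4 * ((i %/ 4)%Z + P4 n)); last by ring.
  rewrite !fp4 //; try lia.
  by apply: IH; lia.
rewrite !(fpm hp) //; try lia.
by have -> : ((i + 4 * P4 n) %% 4)%Z = (i %% 4)%Z by lia.
Qed.

Lemma split4 (G : nat -> 'F_2) M :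
  \sum_(0 <= j < 4 * M) G j = \sum_(0 <= j < M) (G (4 * j)%N + G (4 * j + 1)%N + G (4 * j + 2)%N + G (4 * j + 3)%N).
Proof.
elim: M => [|M IH]; first by rewrite muln0 !big_geq.
have -> : (4 * M.+1 = (4 * M).+3.+1)%N by lia.
rewrite !big_nat_recr //= IH.
rewrite -!addrA; congr (_ + _).
congr (G _ + (G _ + (G _ + G _))); lia.
Qed.

Definition Ssum (p : int -> 'F_2) (n : nat) : 'F_2 := \sum_(0 <= j < (4 ^ n)%N) p (j%:Z - P4 n).

Lemma Ssum_rec p : fprop p -> forall n, Ssum p n.+1 = Ssum p n + (4 ^ n)%N%:R.
Proof.
move=> hp n; rewrite /Ssum expnS split4.
have hpos := P4_gt0 n.
rewrite [RHS](_ : _ = \sum_(0 <= j < (4 ^ n)%N) (p (j%:Z - P4 n) + 1)); last first.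
  by rewrite big_split /= sumr_const_nat subn0.
rewrite big_nat_cond [RHS]big_nat_cond.
apply: eq_bigr => j /andP[/andP[_ hj] _].
have hj' : (j%:Z < P4 n) by rewrite /P4; lia.
rewrite P4S.
have -> : (4 * j)%N%:Z - 4 * P4 n = 4 * (j%:Z - P4 n) by lia.
rewrite (fp4 hp); last by lia.
rewrite (@fpm p hp ((4 * j + 1)%N%:Z - 4 * P4 n)); try lia.
rewrite (@fpm p hp ((4 * j + 2)%N%:Z - 4 * P4 n)); try lia.
rewrite (@fpm p hp ((4 * j + 3)%N%:Z - 4 * P4 n)); try lia.
have -> : (((4 * j + 1)%N%:Z - 4 * P4 n) %% 4)%Z = 1 by lia.
have -> : (((4 * j + 2)%N%:Z - 4 * P4 n) %% 4)%Z = 2 by lia.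
have -> : (((4 * j + 3)%N%:Z - 4 * P4 n) %% 4)%Z = 3 by lia.
rewrite (_ : (2:int) == 1 = false) // (_ : (3:int) == 1 = false) // eqxx !addr0 //.
Qed.

Lemma Ssum1 p : fprop p -> forall n, (0 < n)%N -> Ssum p n = 1.
Proof.
move=> hp; case=> // n _; elim: n => [|n IH].
  rewrite Ssum_rec // /Ssum expn0 big_nat1 (fpm hp) /P4 //=.
  by rewrite add0r.
rewrite Ssum_rec // IH expnS.
have -> : (4 * 4 ^ n = (2 * 4 ^ n) + (2 * 4 ^ n))%N by lia.
by rewrite natrD F2add addr0.
Qed.
Lemma cpow_lt (R : realType) (c x y : R) : 1 < c -> (c `^ x < c `^ y) = (x < y).
Proof.
move=> hc; rewrite /powR; have -> : (c == 0) = false by apply/negbTE; rewrite gt_eqF // (lt_trans ltr01).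
by rewrite ltr_expR ltr_pM2r // ln_gt0.
Qed.

Lemma cpow_le (R : realType) (c x y : R) : 1 < c -> (c `^ x <= c `^ y) = (x <= y).
Proof. by move=> hc; rewrite !leNgt cpow_lt. Qed.

Lemma cz (R : realType) (c : R) (i : int) : 1 < c -> c ^ i = c `^ i%:~R.
Proof. by move=> hc; rewrite powR_intmul // ltW // (lt_trans ltr01). Qed.

Lemma abs_ge (R : realType) (c : R) (g : laurent) v :
  1 < c -> lcoef g v != 0 -> c ^ v <= ls_abs c g.
Proof.
move=> hc hv; rewrite /ls_abs; apply: ub_le_sup; last by exists v.
exists (c ^ (lbnd g)) => y [i hi <-].
rewrite ler_eXz2l //; rewrite leNgt; apply/negP => h.
by move: hi; rewrite /= lzero.
Qed.

Lemma abs_le (R : realType) (c : R) (g : laurent) v :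
  1 < c -> (forall i, lcoef g i != 0 -> i <= v) -> ls_abs c g <= c ^ v.
Proof.
move=> hc hv; rewrite /ls_abs; set E := (X in sup X).
have [hne|he] := pselect (E !=set0)%classic; last first.
  have -> : E = set0 by apply/seteqP; split=> y // hy; apply: he; exists y.
  by rewrite sup0 exprz_ge0 // ltW // (lt_trans ltr01).
apply: ge_sup => //.
move=> y [i hi <-]; rewrite ler_eXz2l //; exact: hv.
Qed.

Lemma abs_ge0 (R : realType) (c : R) (g : laurent) : 1 < c -> 0 <= ls_abs c g.
Proof.
move=> hc; rewrite /ls_abs; set E := (X in sup X).
have [hne|he] := pselect (E !=set0)%classic; last first.
  have -> : E = set0 by apply/seteqP; split=> y // hy; apply: he; exists y.
  by rewrite sup0.
case: hne => y hy; apply: (@le_trans _ _ y).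
  by case: hy => i _ <-; rewrite exprz_ge0 // ltW // (lt_trans ltr01).
apply: ub_le_sup => //.
exists (c ^ (lbnd g)) => z [i hi <-].
rewrite ler_eXz2l //; rewrite leNgt; apply/negP => h.
by move: hi; rewrite /= lzero.
Qed.
Lemma pc_nat (p : {poly 'F_2}) (k : nat) : pc p k%:Z = p`_k.
Proof. by []. Qed.

Lemma coefM_z (p r : {poly 'F_2}) (i : int) :
  pc (p * r) i = zsum 0 (size p) (fun j => pc p j * pc r (i - j)).
Proof.
case: (ltrP i 0) => hi.
  rewrite pc_neg // zsum0 // => j hj _.
  by rewrite (@pc_neg r) ?mulr0 //; lia.
have -> : i = (absz i)%:Z by lia.
set k := absz i.
rewrite pc_nat coefM.
transitivity (zsum 0 k.+1 (fun j => pc p j * pc r (k%:Z - j))).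
  apply: eq_bigr => j _; have hj := ltn_ord j.
  rewrite add0r pc_nat; congr (_ * _).
  by have -> : k%:Z - j%:Z = (k - j)%N%:Z by lia.
set F := fun j => pc p j * pc r (k%:Z - j).
have e1 : zsum 0 (k.+1 + size p) F = zsum 0 k.+1 F.
  apply: zsum_widen; try lia.
  move=> j [hj|hj]; first by rewrite /F pc_neg ?mul0r.
  by rewrite /F (@pc_neg r (k%:Z - j)) ?mulr0 //; lia.
have e2 : zsum 0 (k.+1 + size p) F = zsum 0 (size p) F.
  apply: zsum_widen; try lia.
  move=> j [hj|hj]; first by rewrite /F pc_neg ?mul0r.
  by rewrite /F pc_size ?mul0r.
by rewrite -e1 e2.
Qed.

Lemma zsum_QX N (F : int -> 'F_2) k : (0 < N)%N ->
  zsum 0 (size (QX N)) (fun j => pc (QX N) j * F (k - j)) = F k + F (k - N%:Z).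
Proof.
move=> hN; rewrite size_QX //.
rewrite (zsum_ext (G := fun j => (j == 0)%:R * F (k - j) + (j == N%:Z)%:R * F (k - j))); last first.
  by move=> j _ _; rewrite pc_QX // mulrDl.
by rewrite zsumD !zsum_delta !ifT ?subr0 //; apply/andP; split; lia.
Qed.

Lemma caseA_poly (P Q Pn : {poly 'F_2}) (N : nat) (g : laurent) : (0 < N)%N ->
  ls_is_quot g P Q -> ls_is_quot g Pn (QX N) -> Q * Pn = QX N * P.
Proof.
move=> hN h1 h2; apply/polyP => k.
rewrite -!pc_nat !coefM_z zsum_QX //.
rewrite (zsum_ext (G := fun j => pc Q j * lcoef g (k%:Z - j) + pc Q j * lcoef g (k%:Z - N%:Z - j))); last first.
  move=> j _ _; rewrite -mulrDr; congr (_ * _).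
  rewrite -lcoef_poly -(h2 _) coef_QX //; congr (_ + lcoef g _); ring.
by rewrite zsumD -!coef_pmul !h1.
Qed.

Lemma polyF2_add (p : {poly 'F_2}) : p + p = 0.
Proof. by apply/polyP => i; rewrite coefD coef0 F2add. Qed.

Lemma sqX (a : {poly 'F_2}) : (a + 1) ^+ 2 = a ^+ 2 + 1.
Proof. by rewrite sqrrD1 mulr2n polyF2_add addr0. Qed.

Lemma XQX (n : nat) : ('X + 1) ^+ (4 ^ n) = QX (4 ^ n).
Proof.
rewrite /QX; elim: n => [|n IH]; first by rewrite expn0 !expr1.
have e4 : forall a : {poly 'F_2}, (a + 1) ^+ 4 = a ^+ 4 + 1.
  by move=> a; rewrite (exprM _ 2 2) sqX sqX -exprM.
by rewrite expnS mulnC exprM IH e4 -exprM.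
Qed.

Lemma caseA_size (P Q Pn : {poly 'F_2}) (n : nat) :
  Q != 0 -> Pn.[1] != 0 -> Q * Pn = QX (4 ^ n) * P -> (4 ^ n < size Q)%N.
Proof.
move=> hQ hP he.
have hcop : coprimep (('X + 1) ^+ (4 ^ n)) Pn.
  apply: coprimep_expl; rewrite coprimep_sym.
  have -> : 'X + 1 = 'X - (1 : 'F_2)%:P :> {poly 'F_2}.
    by rewrite -polyCN F2opp polyC1.
  by rewrite coprimep_XsubC rootE.
have hd : (('X + 1) ^+ (4 ^ n)) %| Q.
  rewrite -(Gauss_dvdpl _ hcop) he XQX; exact: dvdp_mulIl.
have := dvdp_leq hQ hd; rewrite XQX size_QX ?expn_gt0 //.
Qed.
Lemma top_exists (d : laurent) : (exists i, lcoef d i != 0) ->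
  exists v, lcoef d v != 0 /\ forall k, v < k -> lcoef d k = 0.
Proof.
move=> [i hi].
have hex : exists k : nat, lcoef d (lbnd d - k%:Z) != 0.
  exists (absz (lbnd d - i)); case: (lerP i (lbnd d)) => h.
    by have -> : lbnd d - (absz (lbnd d - i))%:Z = i by lia.
  by move: hi; rewrite lzero.
case: (ex_minnP hex) => k0 hk0 hmin.
exists (lbnd d - k0%:Z); split => // k hk.
case: (lerP k (lbnd d)) => h; last by rewrite lzero.
apply/eqP; apply: contraT => hne.
have := hmin (absz (lbnd d - k)).
have -> : lbnd d - (absz (lbnd d - k))%:Z = k by lia.
move=> /(_ hne); lia.
Qed.

Lemma top_pmul (p : {poly 'F_2}) (e : int -> 'F_2) w : p != 0 -> e w != 0 ->
  (forall k, w < k -> e k = 0) ->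
  zsum 0 (size p) (fun j => pc p j * e ((size p)%:Z - 1 + w - j)) != 0.
Proof.
move=> hp hw he.
have hs : (0 < size p)%N by rewrite size_poly_gt0.
rewrite (@zsum_widen ((size p)%:Z - 1) 1); first last.
- move=> j [hj|hj]; first by rewrite he ?mulr0 //; lia.
  by rewrite pc_size ?mul0r //; lia.
- lia.
- lia.
rewrite /zsum big_ord1 addr0.
have -> : (size p)%:Z - 1 = (size p).-1%:Z by lia.
rewrite pc_nat.
have -> : (size p).-1%:Z + w - (size p).-1%:Z = w by ring.
have hl : p`_(size p).-1 != 0 by rewrite -lead_coefE lead_coef_eq0.
by rewrite (F2neq0 hl) mul1r.
Qed.

Lemma caseB_bound (P Q Pn : {poly 'F_2}) (N : nat) (g gn : laurent) v :
  (0 < N)%N -> Q != 0 -> ls_is_quot g P Q -> ls_is_quot gn Pn (QX N) ->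
  lcoef g v + lcoef gn v != 0 -> (forall k, v < k -> lcoef g k + lcoef gn k = 0) ->
  0 <= (size Q)%:Z - 1 + (N%:Z + v).
Proof.
move=> hN hQ h1 h2 hv hk.
rewrite leNgt; apply/negP => hneg.
set e := fun k => (lcoef g k + lcoef g (k - N%:Z)) + (lcoef gn k + lcoef gn (k - N%:Z)).
have hew : e (N%:Z + v) != 0.
  rewrite /e.
  have -> : N%:Z + v - N%:Z = v by ring.
  have := hk (N%:Z + v); rewrite (_ : v < N%:Z + v); last by lia.
  move=> /(_ isT) h0.
  have : lcoef g (N%:Z + v) = lcoef gn (N%:Z + v).
    by apply/eqP; rewrite -subr_eq0 F2opp h0.
  by move=> ->; rewrite addrACA F2add add0r.
have hek : forall k, N%:Z + v < k -> e k = 0.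
  move=> k hk'; rewrite /e.
  have e1 := hk k; have e2 := hk (k - N%:Z).
  rewrite addrACA e1 ?e2 ?addr0 //; lia.
have := top_pmul hQ hew hek.
set i := (size Q)%:Z - 1 + (N%:Z + v).
have hi : i < 0 by rewrite /i; lia.
suff -> : zsum 0 (size Q) (fun j => pc Q j * e (i - j)) = 0 by rewrite eqxx.
rewrite /e (zsum_ext (G := fun j => pc Q j * (lcoef g (i - j) + lcoef g (i - N%:Z - j))
     + pc Q j * (lcoef gn (i - j) + lcoef gn (i - j - N%:Z)))); last first.
  move=> j _ _; rewrite -mulrDr; congr (_ * (_ + _)); congr (_ + lcoef g _); ring.
rewrite zsumD.
rewrite (zsum_ext (G := fun j => pc Q j * lcoef g (i - j) + pc Q j * lcoef g (i - N%:Z - j))); last first.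
  by move=> j _ _; rewrite mulrDr.
rewrite zsumD -!coef_pmul !h1 !lcoef_poly !pc_neg ?addr0; try lia.
rewrite (zsum_ext (G := fun j => pc Q j * pc Pn (i - j))); last first.
  by move=> j _ _; rewrite -(lcoef_poly Pn) -(h2 _) coef_QX.
by rewrite -coefM_z pc_neg // addr0.
Qed.
Definition gnc (p : int -> 'F_2) (n : nat) (i : int) : 'F_2 :=
  if i < 0 then p ((i %% P4 n)%Z - P4 n) else 0.

Lemma gn_bnd p n : forall i : int, 0 < i -> gnc p n i = 0.
Proof. by move=> i hi; rewrite /gnc ltNge ltW. Qed.

Definition gn p n : laurent := Laurent (@gn_bnd p n).

Definition Pn (p : int -> 'F_2) (n : nat) : {poly 'F_2} := \poly_(j < (4 ^ n)%N) p (j%:Z - P4 n).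

Lemma gn_quot p n : ls_is_quot (gn p n) (Pn p n) (QX (4 ^ n)).
Proof.
have hpos := P4_gt0 n.
move=> i; rewrite coef_QX ?expn_gt0 // lcoef_poly /pc /Pn /= /gnc.
have hN : (4 ^ n)%N%:Z = P4 n by [].
rewrite hN.
have em : ((i - P4 n) %% P4 n)%Z = (i %% P4 n)%Z.
  by rewrite (_ : i - P4 n = (-1) * P4 n + i) ?modzMDl //; ring.
case: (ltrP i 0) => hi.
  have -> : (i - P4 n < 0) = true by lia.
  by rewrite em F2add.
rewrite coef_poly.
case: (ltrP (i - P4 n) 0) => hi2.
  have -> : (absz i < 4 ^ n)%N = true by rewrite /P4 in hi2; lia.
  rewrite add0r em modz_small; last by apply/andP; split; lia.
  congr p; lia.
have -> : (absz i < 4 ^ n)%N = false by rewrite /P4 in hi2; lia.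
by rewrite addr0.
Qed.

Lemma gn_agree p n : fprop p -> forall i, - (3 * P4 n) < i -> p i = gnc p n i.
Proof.
move=> hp i hi; have hpos := P4_gt0 n; rewrite /gnc.
case: (ltrP i 0) => h0; last by rewrite hp.1.
have hr0 := modz_ge0 i (lt0r_neq0 hpos).
have hr1 := ltz_pmod i hpos.
have he := divz_eq i (P4 n).
move: (i %/ P4 n)%Z (i %% P4 n)%Z hr0 hr1 he => q r hr0 hr1 he.
have hq1 : -3 <= q by nia.
have hq2 : q <= -1 by nia.
have [e1|[e1|e1]] : q = -1 \/ q = -2 \/ q = -3 by lia.
- by rewrite e1 in he; congr p; lia.
- rewrite e1 in he; rewrite (fp_per hp (n := n)); try lia.
  by congr p; lia.
- rewrite e1 in he; rewrite (fp_per hp (n := n)); try lia.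
  rewrite (fp_per hp (n := n)); try lia.
  by congr p; lia.
Qed.

Lemma gn_m3 p n : fprop p -> gnc p n (- (3 * P4 n)) = 0.
Proof.
move=> hp; have hpos := P4_gt0 n; rewrite /gnc.
have -> : (- (3 * P4 n) < 0) = true by lia.
rewrite (_ : - (3 * P4 n) = (-3) * P4 n); last by ring.
by rewrite modzMl add0r fp_m1.
Qed.

Lemma Pn_root p n : fprop p -> (0 < n)%N -> (Pn p n).[1] != 0.
Proof.
move=> hp hn; rewrite /Pn horner_poly.
have -> : \sum_(i < 4 ^ n) p (i%:Z - P4 n) * 1 ^+ i = Ssum p n.
  rewrite /Ssum big_mkord; apply: eq_bigr => i _; by rewrite expr1n mulr1.
by rewrite Ssum1 // oner_eq0.
Qed.
Lemma cz_ge1 (R : realType) (c : R) (i : int) : 1 < c -> 0 <= i -> 1 <= c ^ i.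
Proof. by move=> hc hi; rewrite -(expr0z c) ler_eXz2l. Qed.

Lemma fprop_f (R : realType) (c : R) (f h : laurent) : 1 < c -> ls_abs c f < 1 ->
  ls_is_quot h 'X ('X^4 + 1) ->
  ls_eq (ls_add (ls_add (ls_mul f (ls_mul f (ls_mul f f))) f) h) ls_zero ->
  fprop (lcoef f).
Proof.
move=> hc hf hq he; split; last exact: f_rec hq he.
move=> i hi; apply/eqP; apply: contraT => hne.
have := le_lt_trans (le_trans (cz_ge1 hc hi) (abs_ge hc hne)) hf.
by rewrite ltxx.
Qed.

Lemma abs_poly (R : realType) (c : R) (Q : {poly 'F_2}) : 1 < c -> Q != 0 ->
  ls_abs c (ls_of_poly Q) = c ^ ((size Q)%:Z - 1).
Proof.
move=> hc hQ; apply/eqP; rewrite eq_le; apply/andP; split.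
  apply: abs_le => // i; rewrite lcoef_poly; apply: contraR; rewrite -ltNge => hi.
  by rewrite pc_size //; lia.
have hs : (0 < size Q)%N by rewrite size_poly_gt0.
have -> : (size Q)%:Z - 1 = (size Q).-1%:Z by lia.
apply: abs_ge => //; rewrite lcoef_poly pc_nat -lead_coefE lead_coef_eq0 //.
Qed.

Lemma quot_ext (g g' : laurent) P Q : (forall i, lcoef g i = lcoef g' i) ->
  ls_is_quot g P Q -> ls_is_quot g' P Q.
Proof.
move=> he hq i; rewrite -(hq i) !coef_pmul; apply: zsum_ext => j _ _; by rewrite he.
Qed.

Lemma powR_cz (R : realType) (c : R) (k : int) (t : R) : 1 < c ->
  powR (c ^ k) t = c `^ (k%:~R * t).
Proof. by move=> hc; rewrite cz // powRrM. Qed.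

Lemma realA (R : realType) (q N t : R) : 2 <= q -> N <= q -> - (3 * N) < q * - t -> 3 < t -> False.
Proof. move=> h1 h2 h3 h4; nra. Qed.

Lemma realB (R : realType) (q N v t : R) : 2 <= q -> N <= 2 * q -> - (q + N) <= v -> v < q * - t -> 3 < t -> False.
Proof. move=> h1 h2 h3 h4 h5; nra. Qed.

Lemma QX_neq0 N : (0 < N)%N -> QX N != 0.
Proof. by move=> hN; rewrite -size_poly_eq0 size_QX. Qed.

Lemma lower (R : realType) (c : R) (f : laurent) (t : R) :
  1 < c -> fprop (lcoef f) -> t < 3 -> infinite_set (approx_set c f t).
Proof.
move=> hc hp ht.
set u := fun n : nat => (Pn (lcoef f) n.+1, QX (4 ^ n.+1)).
have hin : forall n, approx_set c f t (u n).
  move=> n; have hN : (0 < 4 ^ n.+1)%N by rewrite expn_gt0.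
  split; first exact: QX_neq0.
  exists (gn (lcoef f) n.+1); split; first exact: gn_quot.
  rewrite /= abs_poly // ?QX_neq0 // size_QX // powR_cz //.
  have hP := P4_gt0 n.+1.
  apply: (@le_lt_trans _ _ (c ^ (- (3 * P4 n.+1)))).
    apply: abs_le => // i; apply: contraR; rewrite -ltNge => hi /=.
    by rewrite (gn_agree hp hi) subrr.
  rewrite cz // cpow_lt //.
  have -> : ((4 ^ n.+1).+1%:Z - 1) = P4 n.+1 by rewrite /P4; lia.
  rewrite intrN intrM.
  have : (0 : R) < (P4 n.+1)%:~R by rewrite ltr0z.
  move: (P4 n.+1)%:~R => x hx.
  have -> : ((3 : int)%:~R : R) = 3 by [].
  nra.
move=> hfin.
have hinj : {in (u @^-1` approx_set c f t)%classic &, injective u}.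
  move=> n m _ _ [_ e].
  have := congr1 (fun p : {poly 'F_2} => size p) e.
  rewrite !size_QX ?expn_gt0 // => [[]] /(expnI (isT : (1 < 4)%N)); by case.
have := finite_preimage hinj hfin.
have -> : (u @^-1` approx_set c f t)%classic = setT.
  by apply/seteqP; split => // n _; exact: hin.
exact: infinite_nat.
Qed.

Lemma find_n (q : nat) : (2 <= q)%N ->
  exists n, [/\ (0 < n)%N, (q < 2 * 4 ^ n)%N & (4 ^ n <= 2 * q)%N].
Proof.
move=> hq.
have hex : exists n, (q < 2 * 4 ^ n)%N.
  exists q; have := ltn_expl q (isT : (1 < 4)%N); lia.
case: (ex_minnP hex) => n hn hmin.
exists n; case: n hn hmin => [|n] hn hmin; first by rewrite expn0 in hn; lia.
split => //.
case: (ltnP q (2 * 4 ^ n)) => h; first by have := hmin n h; lia.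
rewrite expnS; lia.
Qed.

Lemma deg_bound (R : realType) (c : R) (f : laurent) (t : R) P Q g :
  1 < c -> fprop (lcoef f) -> 3 < t -> Q != 0 -> ls_is_quot g P Q ->
  ls_abs c (ls_sub f g) < powR (ls_abs c (ls_of_poly Q)) (- t) ->
  (size Q <= 2)%N.
Proof.
move=> hc hp ht hQ hq hlt.
rewrite leqNgt; apply/negP => hs.
have [n [hn h1 h2]] := find_n (q := (size Q).-1) (ltac:(lia)).
rewrite abs_poly // powR_cz // in hlt.
set q := (size Q)%:Z - 1 in hlt.
have hqR : (2 : R) <= q%:~R.
  by rewrite (_ : (2 : R) = (2 : int)%:~R) // ler_int /q; lia.
have hPn := P4_gt0 n.
have [hA|hB] := pselect (forall i, lcoef g i = gnc (lcoef f) n i).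
  have hq' : ls_is_quot (gn (lcoef f) n) P Q by apply: (quot_ext (g' := gn (lcoef f) n) _ hq) => i; exact: hA i.
  have hpoly := caseA_poly (expn_gt0 4 n) hq' (gn_quot (lcoef f) n).
  have hsz := caseA_size hQ (Pn_root hp hn) hpoly.
  have hv : lcoef (ls_sub f g) (- (3 * P4 n)) != 0.
    by rewrite /= hA gn_m3 // (fp_m3 hp) subr0 oner_eq0.
  have := le_lt_trans (abs_ge hc hv) hlt.
  rewrite cz // cpow_lt // intrN intrM => hh.
  apply: (realA (N := (P4 n)%:~R) hqR _ hh ht).
  by rewrite ler_int /q /P4; lia.
have [v [hv1 hv2]] : exists v, lcoef (ls_sub g (gn (lcoef f) n)) v != 0 /\
    forall k, v < k -> lcoef (ls_sub g (gn (lcoef f) n)) k = 0.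
  apply: top_exists.
  move/existsNP: hB => [i hi]; exists i => /=.
  by rewrite subr_eq0; apply/eqP.
have hw1 : lcoef g v + lcoef (gn (lcoef f) n) v != 0.
  by rewrite -[lcoef (gn _ _) v]F2opp.
have hw2 : forall k, v < k -> lcoef g k + lcoef (gn (lcoef f) n) k = 0.
  by move=> k hk; rewrite -[lcoef (gn _ _) k]F2opp; exact: hv2.
have hB' := caseB_bound (expn_gt0 4 n) hQ hq (gn_quot (lcoef f) n) hw1 hw2.
have hv3 : - (3 * P4 n) < v by rewrite /P4 in hPn *; lia.
have hfv : lcoef (ls_sub f g) v != 0.
  rewrite /= (gn_agree hp hv3) -opprB oppr_eq0; exact: hv1.
have := le_lt_trans (abs_ge hc hfv) hlt.
rewrite cz // cpow_lt // => hh.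
apply: (realB (N := (P4 n)%:~R) hqR _ _ hh ht).
  by rewrite (_ : (2 : R) = (2 : int)%:~R) // -intrM ler_int /q /P4; lia.
by rewrite -intrD -intrN ler_int /q /P4; lia.
Qed.

Lemma sizeP_bound (R : realType) (c : R) (f : laurent) (t : R) P Q g :
  1 < c -> fprop (lcoef f) -> 0 < t -> Q != 0 -> ls_is_quot g P Q ->
  ls_abs c (ls_sub f g) < powR (ls_abs c (ls_of_poly Q)) (- t) ->
  (size P <= (size Q).-1)%N.
Proof.
move=> hc hp ht hQ hq hlt.
rewrite abs_poly // powR_cz // in hlt.
have hs : (0 < size Q)%N by rewrite size_poly_gt0.
have hlt1 : ls_abs c (ls_sub f g) < 1.
  apply: (lt_le_trans hlt).
  rewrite -[X in _ <= X](powRr0 c) cpow_le //.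
  rewrite mulrN oppr_le0 mulr_ge0 ?(ltW ht) // ler0z; lia.
have hg0 : forall i, 0 <= i -> lcoef g i = 0.
  move=> i hi; apply/eqP; apply: contraT => hne.
  have hfg : lcoef (ls_sub f g) i != 0 by rewrite /= hp.1 // sub0r oppr_eq0.
  have := le_lt_trans (le_trans (cz_ge1 hc hi) (abs_ge hc hfg)) hlt1.
  by rewrite ltxx.
apply/leq_sizeP => k hk.
rewrite -pc_nat -lcoef_poly -(hq _) coef_pmul zsum0 // => j hj1 hj2.
by rewrite hg0 ?mulr0 //; lia.
Qed.

Definition toP (a : {ffun 'I_2 -> 'F_2}) : {poly 'F_2} := \poly_(i < 2) a (inord i).

Lemma toP_surj (p : {poly 'F_2}) : (size p <= 2)%N -> p = toP [ffun i : 'I_2 => p`_i].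
Proof.
move=> hs; apply/polyP => k; rewrite /toP coef_poly.
case: ltnP => hk; first by rewrite ffunE inordK.
by apply: nth_default; apply: leq_trans hk.
Qed.

Lemma upper (R : realType) (c : R) (f : laurent) (t : R) :
  1 < c -> fprop (lcoef f) -> 3 < t -> finite_set (approx_set c f t).
Proof.
move=> hc hp ht.
apply: (@sub_finite_set _ _ [set (toP a, toP b) | a in [set: {ffun 'I_2 -> 'F_2}] & b in [set: {ffun 'I_2 -> 'F_2}]]); last first.
  by apply: finite_image2; exact: finite_finset.
move=> [P Q] [/= hQ [g [hq hlt]]].
have hsQ := deg_bound hc hp ht hQ hq hlt.
have ht0 : (0 : R) < t by apply: lt_trans ht; rewrite ltr0n.
have hsP := sizeP_bound hc hp ht0 hQ hq hlt.
exists [ffun i : 'I_2 => P`_i] => //; exists [ffun i : 'I_2 => Q`_i] => //.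
by rewrite -!toP_surj //; lia.
Qed.

Unset Implicit Arguments.
Theorem proposition5p2 (R : realType) (c : R) (f : laurent) :
  1 < c -> ls_abs c f < 1 -> solves_eq f ->
  irr_exponent c f = 3%:E.
Proof.
move=> hc hf [h [hq he]].
have hp := fprop_f hc hf hq he.
rewrite /irr_exponent.
set S := (X in ereal_sup X).
have hub : forall x, S x -> (x <= 3%:E)%E.
  move=> _ [tau htau <-]; rewrite lee_fin leNgt; apply/negP => h3.
  by apply: htau; exact: upper hc hp h3.
have hlb : forall tau : R, tau < 3 -> (tau%:E <= ereal_sup S)%E.
  move=> tau ht; apply: ereal_sup_ubound; exists tau => //; exact: lower hc hp ht.
apply/eqP; rewrite eq_le; apply/andP; split; first exact: ge_ereal_sup.
move: (ereal_sup S) hlb => [r| |] hlb //.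
  rewrite lee_fin leNgt; apply/negP => hr.
  have := hlb ((r + 3) / 2) (ltac:(lra)).
  rewrite lee_fin; lra.
by rewrite leey.
by move: (hlb 0 ltac:(lra)); rewrite leeNy_eq.
Qed.
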